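(* Let $V\subset Z^n$ be finite, let $C$ be the cluster of unit cubes in $\mathbb{R}^n$ centered at the points of $V$, and let $\mathcal{M}$ be the lattice generated by $\tfrac12 e_1,e_2,\dots,e_n$. If there is an Abelian group $G$ of order $2|V|$ and a homomorphism $\phi:\mathcal{M}\to G$ such that the restriction of $\phi$ to $W=V\cup(V+\tfrac12 e_1)$ is a bijection onto $G$ and $\phi(e_i)$ is a generator of $G$ for some $i\ge 2$, then there is a non-regular lattice tiling of $\mathbb{R}^n$ by $C$.
   Context: A unit cube centered at $c\in\mathbb{R}^n$ is $c+[-\tfrac12,\tfrac12]^n$. A lattice tiling of $\mathbb{R}^n$ by $C$ is a family $\{C+l;\ l\in\mathcal{L}\}$ with $\mathcal{L}$ a lattice, whose members have pairwise disjoint interiors and cover $\mathbb{R}^n$. Two unit cubes with centers $c,c'$ are neighbors if there is an index $i$ with $|c_i-c_i'|=1$ and $c_j=c_j'$ for all $j\ne i$. A tiling by clusters of cubes is non-regular if it contains two cubes from different tiles whose intersection is $(n-1)$-dimensional but which are not neighbors. *)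

(* Defs.v *)
From HB Require Import structures.
From mathcomp Require Import all_boot all_order all_algebra.
From mathcomp Require Import finmap.
From mathcomp Require Import reals.
Set Implicit Arguments. Unset Strict Implicit. Unset Printing Implicit Defensive.
Import Order.TTheory GRing.Theory Num.Theory.
Local Open Scope ring_scope.

Section Defs.
Variables (R : realType) (n : nat).
Implicit Types (x y c l : 'rV[R]_n) (S : 'rV[R]_n -> Prop).

Definition ptZ (v : 'rV[int]_n) : 'rV[R]_n := map_mx (fun k : int => k%:~R) v.

Definition cube c : 'rV[R]_n -> Prop :=
  fun x => forall j : 'I_n, `|x ord0 j - c ord0 j| <= 2^-1.

Definition cluster (V : {fset 'rV[int]_n}) : 'rV[R]_n -> Prop :=
  fun x => exists2 v, v \in V & cube (ptZ v) x.

Definition translate S l : 'rV[R]_n -> Prop := fun x => S (x - l).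

(* topological interior in R^n (sup-norm balls, equivalent to the Euclidean topology) *)
Definition interior S : 'rV[R]_n -> Prop :=
  fun x => exists2 e : R, 0 < e &
    forall y, (forall j : 'I_n, `|y ord0 j - x ord0 j| < e) -> S y.

Definition lattice_gen (B : 'M[R]_n) : 'rV[R]_n -> Prop :=
  fun v => exists z : 'rV[int]_n, v = ptZ z *m B.

Definition is_lattice (L : 'rV[R]_n -> Prop) :=
  exists B : 'M[R]_n, B \in unitmx /\ forall v, L v <-> lattice_gen B v.

Definition lattice_tiling (C L : 'rV[R]_n -> Prop) :=
  [/\ is_lattice L,
      (forall l l', L l -> L l' -> l <> l' ->
          forall x, ~ (interior (translate C l) x /\ interior (translate C l') x))
    & (forall x, exists2 l, L l & translate C l x)].

(* affine dimension of a set S: d = dim span {x - y | x, y in S}, S nonempty *)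
Definition diff_rows S k (A : 'M[R]_(k, n)) :=
  forall i : 'I_k, exists x, exists y, [/\ S x, S y & row i A = x - y].

Definition affdim S (d : nat) :=
  [/\ exists x, S x,
      exists A : 'M[R]_(d, n), diff_rows S A /\ \rank A = d
    & forall k (A : 'M[R]_(k, n)), diff_rows S A -> (\rank A <= d)%N].

Definition neighbors c c' :=
  exists i : 'I_n, `|c ord0 i - c' ord0 i| = 1 /\
    forall j : 'I_n, j != i -> c ord0 j = c' ord0 j.

Definition nonregular (V : {fset 'rV[int]_n}) (L : 'rV[R]_n -> Prop) :=
  exists l, exists l', exists v, exists w,
    [/\ L l, L l', l <> l', v \in V & w \in V] /\
       (affdim (fun x => cube (ptZ v + l) x /\ cube (ptZ w + l') x) n.-1
        /\ ~ neighbors (ptZ v + l) (ptZ w + l')).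

Definition halfe1_basis : 'M[R]_n :=
  \matrix_(i, j) (if i == j then (if val i == 0%N then 2^-1 else 1) else 0).

Definition Mlat : 'rV[R]_n -> Prop := lattice_gen halfe1_basis.

Definition halfe1 : 'rV[R]_n := \row_j (if val j == 0%N then 2^-1 else 0).

Definition Wset (V : {fset 'rV[int]_n}) : 'rV[R]_n -> Prop :=
  fun x => (exists2 v, v \in V & x = ptZ v) \/ (exists2 v, v \in V & x = ptZ v + halfe1).

Definition evec (i : 'I_n) : 'rV[R]_n := delta_mx ord0 i.

End Defs.

Definition generates (G : finZmodType) (g : G) := forall h : G, exists k : int, h = g *~ k.

(* Main.v *)
Require Import Defs.
From HB Require Import structures.
From mathcomp Require Import all_boot all_order all_algebra.
From mathcomp Require Import finmap.
From mathcomp Require Import reals.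
From mathcomp Require Import all_fingroup cyclic.
From mathcomp Require Import ring lra zify.
From Stdlib Require Import Classical.
Set Implicit Arguments. Unset Strict Implicit. Unset Printing Implicit Defensive.
Import Order.TTheory GRing.Theory Num.Theory.
Local Open Scope ring_scope.


Section S1.
Variables (R : realType) (n : nat).

Definition hz (z : 'rV[int]_n) : 'rV[R]_n :=
  \row_j (if val j == 0%N then (z ord0 j)%:~R / 2 else (z ord0 j)%:~R).

Lemma hzE z j : hz z ord0 j = if val j == 0%N then (z ord0 j)%:~R / 2 else (z ord0 j)%:~R.
Proof. by rewrite mxE. Qed.

Lemma hzD a b : hz (a + b) = hz a + hz b.
Proof. apply/rowP => j; rewrite !mxE intrD; case: ifP => _ //; by rewrite mulrDl. Qed.

Lemma hzN a : hz (- a) = - hz a.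
Proof. apply/rowP => j; rewrite !mxE intrN; case: ifP => _ //; by rewrite mulNr. Qed.

Lemma hzB a b : hz (a - b) = hz a - hz b.
Proof. by rewrite hzD hzN. Qed.

Lemma hz0 : hz 0 = 0.
Proof. apply/rowP => j; rewrite !mxE; case: ifP => _ //; by rewrite mul0r. Qed.

Lemma hz_inj a b : hz a = hz b -> a = b.
Proof.
move=> /rowP H; apply/rowP => j; move: (H j); rewrite !mxE.
case: ifP => _ E; apply/eqP; rewrite -(eqr_int R); apply/eqP.
  by have := congr1 (fun x => x * 2) E; rewrite /= !divfK ?pnatr_eq0.
by [].
Qed.

Definition diagH : 'rV[R]_n := \row_j (if val j == 0%N then 2^-1 else 1).

Lemma halfe1_diag : halfe1_basis R n = diag_mx diagH.
Proof. apply/matrixP => i j; rewrite !mxE; case: (i =P j) => [->|/eqP/negPf ne]; rewrite ?eqxx ?ne ?mulr1n ?mulr0n //.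
Qed.

Lemma ptZH z : ptZ R z *m halfe1_basis R n = hz z.
Proof. rewrite halfe1_diag mul_mx_diag; apply/rowP => j; rewrite !mxE.
by case: ifP; rewrite ?mulr1. Qed.

Lemma MlatE x : Mlat x <-> exists z, x = hz z.
Proof. by split => -[z ->]; exists z; rewrite ptZH. Qed.

Lemma Mlat_hz z : Mlat (hz z).
Proof. by apply/MlatE; exists z. Qed.

Definition dbl (v : 'rV[int]_n) : 'rV[int]_n := \row_j (if val j == 0%N then v ord0 j * 2 else v ord0 j).

Lemma ptZ_dbl v : ptZ R v = hz (dbl v).
Proof. apply/rowP => j; rewrite !mxE; case: ifP => h; rewrite ?h ?intrM ?mulfK ?pnatr_eq0 //. Qed.

Definition dz (j : 'I_n) : 'rV[int]_n := delta_mx ord0 j.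
Definition d0 : 'rV[int]_n := \row_j (val j == 0%N)%:R.

Lemma halfe1_hz : halfe1 R n = hz d0.
Proof. apply/rowP => j; rewrite !mxE; case: ifP => _ //=; by rewrite mul1r. Qed.

Lemma evec_hz (j : 'I_n) : val j != 0%N -> evec R j = hz (dz j).
Proof. move=> /negPf hj; apply/rowP => k; rewrite !mxE.
case: (k =P j) => [->|/eqP/negPf ne]; first by rewrite hj.
by rewrite /= ?andbF; case: ifP => _; rewrite ?mul0r. Qed.

End S1.


Section Ord.
Variable G : finZmodType.
Lemma mulz_eq0_order (g : G) (k : int) : (g *~ k == 0) = (#[g]%g %| k)%Z.
Proof.
case: k => m.
  by rewrite -pmulrn -FinRing.zmodXgE -FinRing.zmod1gE -order_dvdn.
by rewrite NegzE mulrNz oppr_eq0 dvdzE abszN -pmulrn -FinRing.zmodXgE -FinRing.zmod1gE -order_dvdn.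
Qed.
End Ord.

Section S2.
Variables (R : realType) (n : nat) (V : {fset 'rV[int]_n}) (G : finZmodType)
  (phi : 'rV[R]_n -> G)
  (hhom : forall x y, Mlat x -> Mlat y -> phi (x + y) = phi x + phi y).

Definition phz (z : 'rV[int]_n) : G := phi (hz R z).

Lemma phzD a b : phz (a + b) = phz a + phz b.
Proof. by rewrite /phz hzD; apply: hhom; exact: Mlat_hz. Qed.

Lemma phzB a b : phz (a - b) = phz a - phz b.
Proof.
by apply/eqP; rewrite eq_sym subr_eq -phzD subrK.
Qed.

HB.instance Definition _ := GRing.isZmodMorphism.Build _ _ phz phzB.

Lemma phz_sum z : phz z = \sum_j phz (dz j) *~ z ord0 j.
Proof.
rewrite {1}(row_sum_delta z) raddf_sum; apply: eq_bigr => j _.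
by rewrite -[X in X *: _]intz scaler_int raddfMz.
Qed.
End S2.

Section S3.
Variables (R : realType) (n : nat) (G : finZmodType)
  (phi : 'rV[R]_n -> G)
  (hhom : forall x y, Mlat x -> Mlat y -> phi (x + y) = phi x + phi y).
Variables (g : G) (s : 'I_n -> int) (i : 'I_n).
Hypothesis hs : forall j, phz phi (dz j) = g *~ s j.
Hypothesis hsi : s i = 1.

Definition sigma (z : 'rV[int]_n) : int := \sum_(j < n) z ord0 j * s j.

Lemma phz_sigma z : phz phi z = g *~ sigma z.
Proof.
rewrite (phz_sum hhom) /sigma mulrz_sumr; apply: eq_bigr => j _.
by rewrite hs -mulrzA mulrC.
Qed.

Definition NN : int := (#[g]%g)%:Z.
Definition kerZ z := (NN %| sigma z)%Z.

Lemma phz_eq0 z : (phz phi z == 0) = kerZ z.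
Proof. by rewrite phz_sigma mulz_eq0_order. Qed.

Definition PP : 'M[int]_n :=
  \matrix_(j, k) (if k == i then (if j == i then NN else - s j) else (j == k)%:R).

Lemma zPE (z : 'rV[int]_n) (k : 'I_n) : (z *m PP) ord0 k =
  if k == i then z ord0 i * NN - \sum_(j | j != i) z ord0 j * s j else z ord0 k.
Proof.
rewrite !mxE; case: ifP => [/eqP ->|/eqP hk].
  rewrite (bigD1 i) //= !mxE !eqxx; congr (_ + _).
  rewrite -sumrN; apply: eq_bigr => j /negPf hj; rewrite !mxE eqxx hj.
  by rewrite mulrN.
rewrite (bigD1 k) //= !mxE; have -> : (k == i) = false by apply/eqP.
rewrite eqxx mulr1 big1 ?addr0 // => j /negPf hj; rewrite !mxE.
have -> : (k == i) = false by apply/eqP.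
by rewrite hj mulr0.
Qed.

Lemma sigma_split (z : 'rV[int]_n) : sigma z = z ord0 i + \sum_(j | j != i) z ord0 j * s j.
Proof. by rewrite /sigma (bigD1 i) //= hsi mulr1. Qed.

Lemma sigma_zP (z : 'rV[int]_n) : sigma (z *m PP) = z ord0 i * NN.
Proof.
rewrite sigma_split zPE eqxx.
have -> : \sum_(j | j != i) (z *m PP) ord0 j * s j = \sum_(j | j != i) z ord0 j * s j.
  by apply: eq_bigr => j /negPf hj; rewrite zPE hj.
by rewrite subrK.
Qed.

Lemma kerZP (y : 'rV[int]_n) : kerZ y <-> exists z, y = z *m PP.
Proof.
split; last by move=> [z ->]; rewrite /kerZ sigma_zP dvdz_mull.
move=> hk; exists (\row_k (if k == i then (sigma y %/ NN)%Z else y ord0 k)).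
apply/rowP => k; rewrite zPE.
case: (k =P i) => [->|/eqP/negPf hki]; last by rewrite mxE hki.
rewrite mxE eqxx divzK //.
have -> : \sum_(j | j != i) (\row_k0 (if k0 == i then (sigma y %/ NN)%Z else y ord0 k0)) ord0 j * s j
   = \sum_(j | j != i) y ord0 j * s j.
  by apply: eq_bigr => j /negPf hj; rewrite mxE hj.
by rewrite sigma_split addrK.
Qed.


Definition BB : 'M[R]_n := map_mx (fun k : int => k%:~R) PP *m halfe1_basis R n.

Lemma ptZ_BB (z : 'rV[int]_n) : ptZ R z *m BB = hz R (z *m PP).
Proof.
rewrite /BB mulmxA -ptZH; congr (_ *m _).
apply/rowP => k; rewrite !mxE rmorph_sum; apply: eq_bigr => j _.
by rewrite !mxE rmorphM.
Qed.

Lemma halfe1_unit : halfe1_basis R n \in unitmx.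
Proof.
rewrite halfe1_diag unitmxE det_diag unitfE prodf_seq_neq0.
apply/allP => j _ /=; rewrite mxE; case: ifP => _; by rewrite ?invr_eq0 ?pnatr_eq0 ?oner_eq0.
Qed.


Lemma NN_neq0 : (NN%:~R : R) != 0.
Proof. by rewrite /NN pnatr_eq0 -lt0n order_gt0. Qed.

Definition QQ : 'M[R]_n := \matrix_(j, k)
  (if k == i then (if j == i then (NN%:~R)^-1 else (s j)%:~R / NN%:~R) else (j == k)%:R).

Lemma PQ1 : map_mx (fun k : int => k%:~R) PP *m QQ = 1%:M.
Proof.
apply/matrixP => j k; rewrite !mxE.
case: (k =P i) => [->|/eqP/negPf hk].
  rewrite (bigD1 i) //= !mxE !eqxx.
  case: (j =P i) => [->|/eqP/negPf hj].
    rewrite big1 ?addr0 ?mulfV ?NN_neq0 // => m /negPf hm.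
    by rewrite !mxE hm eq_sym hm mulr0n mul0r.
  rewrite (bigD1 j) ?hj //= !mxE hj !eqxx mulr1n mul1r big1 ?addr0.
    by rewrite intrN mulNr addNr.
  move=> m /andP [/negPf hmi /negPf hmj]; rewrite !mxE hmi eq_sym hmj.
  by rewrite mulr0n mul0r.
rewrite (bigD1 k) //= !mxE hk !eqxx mulr1 big1 ?addr0.
  by case: (j == k).
move=> m /negPf hm; rewrite !mxE hk hm mulr0.
by [].
Qed.

Lemma BB_unit : BB \in unitmx.
Proof.
rewrite /BB unitmx_mul halfe1_unit andbT.
by case: (mulmx1_unit PQ1).
Qed.

End S3.


Lemma cube_shift (R : realType) n (c l x : 'rV[R]_n) : cube c (x - l) <-> cube (c + l) x.
Proof.
have E : forall j, (x - l) ord0 j - c ord0 j = x ord0 j - (c + l) ord0 j.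
  by move=> j; rewrite !mxE; ring.
by split => H j; [rewrite -E | rewrite E]; apply: H.
Qed.

Lemma abs_half (R : realType) (a : R) : `|a| <= 2^-1 <-> -(2^-1) <= a <= 2^-1.
Proof. by rewrite ler_norml. Qed.




Section Geo.
Variables (R : realType) (n : nat).

Lemma small_pos (e : R) : 0 < e -> exists2 r : R, 0 < r & (r < e) && (r <= 8^-1).
Proof.
move=> he; exists (Num.min e (4^-1) / 2).
  by rewrite divr_gt0 // lt_min he invr_gt0 ltr0n.
have h1 : Num.min e (4^-1) <= e by rewrite ge_min lexx.
have h2 : Num.min e (4^-1) <= 4^-1 by rewrite ge_min lexx orbT.
have h3 : 0 < Num.min e (4^-1) by rewrite lt_min he invr_gt0 ltr0n.
apply/andP; split; lra.
Qed.

Lemma not_int_shift (a r : R) : 0 < r -> r <= 8^-1 -> a * 2 \is a Num.int ->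
  (a + r) * 2 \isn't a Num.int.
Proof.
move=> hr hr8 ha; apply/negP => har.
have : r * 2 \is a Num.int.
  have -> : r * 2 = (a + r) * 2 - a * 2 by ring.
  by rewrite rpredB.
move=> /intrP [k hk].
have k0 : (0 : R) < k%:~R by rewrite -hk; lra.
have k1 : (k%:~R : R) < 1%:~R by rewrite -hk mulr1z; lra.
move: k0 k1; rewrite ltr0z ltr_int; lia.
Qed.

Lemma perturb (x : 'rV[R]_n) (e : R) : 0 < e ->
  exists p : 'rV[R]_n, (forall j, `|p ord0 j - x ord0 j| < e) /\
                       (forall j, p ord0 j * 2 \isn't a Num.int).
Proof.
move=> he; have [r hr /andP [hre hr8]] := small_pos he.
exists (\row_j (if x ord0 j * 2 \is a Num.int then x ord0 j + r else x ord0 j)).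
split => j; rewrite mxE; case: ifP => hx.
- by rewrite addrC addKr gtr0_norm.
- by rewrite subrr normr0.
- exact: not_int_shift.
- by rewrite hx.
Qed.

Lemma hz_half (u : 'rV[int]_n) j : hz R u ord0 j * 2 \is a Num.int.
Proof.
rewrite hzE; case: ifP => _; last by rewrite rpredM ?intr_int ?natr_int.
by rewrite divfK ?pnatr_eq0 // intr_int.
Qed.

Lemma strict_half (p c : R) : `|p - c| <= 2^-1 -> c * 2 \is a Num.int ->
  p * 2 \isn't a Num.int -> `|p - c| < 2^-1.
Proof.
move=> hle hc hp; rewrite lt_neqAle hle andbT; apply/negP => /eqP E.
move/eqP: E; rewrite eqr_norml => /andP [/orP [/eqP E|/eqP E] _]; move/negP: hp; apply.
  have -> : p * 2 = c * 2 + 1 by rewrite -(subrK c p) E; field.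
  by apply: rpredD => //; exact: int_num1.
have -> : p * 2 = c * 2 - 1 by rewrite -(subrK c p) E; field.
by apply: rpredB => //; exact: int_num1.
Qed.


Lemma norm_int_lt (d c : int) : `|d%:~R : R| < c%:~R -> (- c < d < c)%R.
Proof. by rewrite -intr_norm ltr_int ltr_norml. Qed.

Lemma close (u u' : 'rV[int]_n) (j0 : 'I_n) : val j0 = 0%N ->
  (forall j, `|hz R u ord0 j - hz R u' ord0 j| < 1) ->
  [\/ u' = u, u' = u + d0 n | u = u' + d0 n].
Proof.
move=> hj0 H.
have E : forall j, val j != 0%N -> u' ord0 j = u ord0 j.
  move=> j /negPf hj; move: (H j); rewrite !hzE hj -intrB.
  rewrite -[1 : R]/(1%:~R) => /norm_int_lt; lia.
have : (- 2 < u ord0 j0 - u' ord0 j0 < 2)%R.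
  move: (H j0); rewrite !hzE hj0 /= -mulrBl -intrB normrM.
  rewrite (@gtr0_norm _ (2^-1)) ?invr_gt0 ?ltr0n // => hlt; apply: (norm_int_lt (c := 2)).
  have -> : (2%:~R : R) = 2 by []. lra.
move=> hb.
have hj0' : forall j, val j == 0%N -> j = j0.
  by move=> j /eqP hj; apply: val_inj; rewrite /= hj hj0.
have : (u ord0 j0 = u' ord0 j0 \/ u' ord0 j0 = u ord0 j0 + 1) \/ u ord0 j0 = u' ord0 j0 + 1 by lia.
move=> [[e|e]|e]; [apply: Or31 | apply: Or32 | apply: Or33]; apply/rowP => j; rewrite ?mxE;
  (case: (boolP (val j == 0%N)) => hj;
   [rewrite (hj0' _ hj) ?hj0 /= ?mulr1n; idtac | rewrite (E _ hj) ?(negPf hj) /= ?addr0 //]).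
all: have o : (0 : 'I_1) = ord0 by apply: val_inj.
all: by rewrite o. Qed.


Section Face.
Variables (c : 'rV[R]_n) (i : 'I_n).
Hypothesis hi0 : val i != 0%N.

Definition cp : 'rV[R]_n := c + evec R i + halfe1 R n.

Lemma cpE j : cp ord0 j = c ord0 j + (j == i)%:R + (if val j == 0%N then 2^-1 else 0).
Proof. by rewrite !mxE eqxx. Qed.

Definition S2 := fun x => cube c x /\ cube cp x.

Lemma S2_i x : S2 x -> x ord0 i = c ord0 i + 2^-1.
Proof.
move=> [h1 h2]; move: (h1 i) (h2 i); rewrite cpE eqxx (negPf hi0) addr0 mulr1n.
move=> /abs_half /andP [a b] /abs_half /andP [a' b']; lra.
Qed.

Definition x0 : 'rV[R]_n := \row_j (c ord0 j + (j == i)%:R / 2 + (if val j == 0%N then 4^-1 else 0)).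

Lemma S2_x0 : S2 x0.
Proof.
split => j; apply/abs_half; rewrite ?cpE mxE; case: (j =P i) => [->|/eqP/negPf hji];
  rewrite ?eqxx ?(negPf hi0) ?hji /= ?mulr1n ?mul0r ?addr0; try lra;
  case: ifP => _; rewrite ?addr0; lra.
Qed.

Definition xk (j : 'I_n) : 'rV[R]_n := x0 + 4^-1 *: evec R j.

Lemma S2_xk j : j != i -> S2 (xk j).
Proof.
move=> /negPf hji; have hij : (i == j) = false by rewrite eq_sym.
split => k; apply/abs_half; rewrite ?cpE !mxE.
all: case: (k =P i) => [->|/eqP/negPf hki];
  rewrite ?eqxx ?(negPf hi0) ?hji ?hij ?hki /= ?mulr1n ?mul0r ?mulr0 ?addr0; try lra.
all: case: (k =P j) => [->|/eqP/negPf hkj]; rewrite ?eqxx ?hkj /= ?mulr1 ?mulr0 ?addr0.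
all: case: ifP => _; rewrite ?addr0; lra.
Qed.

Definition AA : 'M[R]_(n.-1, n) := \matrix_(k, j) (if j == lift i k then 4^-1 else 0).

Lemma AA_diff : diff_rows S2 AA.
Proof.
move=> k; exists (xk (lift i k)), x0; split.
- by apply: S2_xk; rewrite eq_sym neq_lift.
- exact: S2_x0.
apply/rowP => j; rewrite !mxE addrC addKr.
have o : (0 : 'I_1) == ord0 by []. rewrite o /=.
by case: ifP => _; rewrite /= ?mulr1 ?mulr0.
Qed.

Lemma AA_rank : \rank AA = n.-1.
Proof.
apply/eqP; rewrite eqn_leq rank_leq_row /=.
apply: (@mulmx1_min_rank _ _ _ _ _ (16%:M) (AA^T)).
apply/matrixP => k k'; rewrite mul_scalar_mx !mxE (bigD1 (lift i k)) //= !mxE eqxx.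
rewrite big1 ?addr0.
  rewrite (inj_eq (@lift_inj _ i)) eq_sym.
  by case: eqP => _ /=; rewrite ?mulr0 ?mulr1n ?mulr0n //; field.
by move=> j /negPf hj; rewrite !mxE hj mulr0 mul0r.
Qed.

Lemma rank_bound k (A : 'M[R]_(k, n)) : diff_rows S2 A -> (\rank A <= n.-1)%N.
Proof.
move=> hA.
have col0 : A *m (delta_mx 0 i : 'rV[R]_n)^T = 0.
  apply/matrixP => r q; rewrite !mxE (bigD1 i) //= !mxE !eqxx big1 ?addr0.
    have [x [y [sx sy /rowP e]]] := hA r.
    move: (e i); rewrite !mxE (S2_i sx) (S2_i sy) subrr => ->.
    by rewrite mul0r.
  by move=> j /negPf hj; rewrite !mxE hj andbF mulr0.
have : ((delta_mx 0 i : 'rV[R]_n) <= kermx A^T)%MS.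
  by apply/sub_kermxP; rewrite -(trmxK (delta_mx 0 i : 'rV[R]_n)) -trmx_mul col0 trmx0.
move=> /mxrankS; rewrite mxrank_delta mxrank_ker mxrank_tr.
lia.
Qed.

Lemma S2_affdim : affdim S2 n.-1.
Proof.
split.
- by exists x0; exact: S2_x0.
- by exists AA; split; [exact: AA_diff | exact: AA_rank].
- exact: rank_bound.
Qed.

Lemma not_neigh (j0 : 'I_n) : val j0 = 0%N -> ~ neighbors c cp.
Proof.
move=> hj0 [k [_ hk]].
case: (k =P j0) => [ekj|/eqP nk].
  have : i != k by rewrite ekj; apply/eqP => e; move: hi0; rewrite e hj0.
  move=> /hk; rewrite cpE eqxx (negPf hi0) addr0 => /eqP; rewrite -subr_eq0 opprD addrA subrr.
  by rewrite add0r oppr_eq0 oner_eq0.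
have : j0 != k by rewrite eq_sym.
move=> /hk; rewrite cpE hj0 eqxx.
have -> : (j0 == i) = false by apply/eqP => e; move: hi0; rewrite -e hj0.
rewrite addr0 /=; move=> /eqP; rewrite -subr_eq0 opprD addrA subrr add0r oppr_eq0.
by rewrite invr_eq0 pnatr_eq0.
Qed.

End Face.

End Geo.


Section S4.
Variables (R : realType) (n : nat) (V : {fset 'rV[int]_n}) (G : finZmodType)
  (phi : 'rV[R]_n -> G)
  (hhom : forall x y, Mlat x -> Mlat y -> phi (x + y) = phi x + phi y)
  (hinj : forall x y, Wset V x -> Wset V y -> phi x = phi y -> x = y)
  (hsurj : forall g : G, exists2 x, Wset V x & phi x = g).
Variables (g : G) (s : 'I_n -> int) (i : 'I_n).
Hypothesis hs : forall j, phz phi (dz j) = g *~ s j.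
Hypothesis hsi : s i = 1.
Hypothesis hi0 : val i != 0%N.

Let phz := phz phi.
Let h := phz (d0 n).
Let j0 : 'I_n := Ordinal (leq_ltn_trans (leq0n i) (ltn_ord i)).
Definition LL := lattice_gen (BB R g s i).

Lemma LLE x : LL x <-> exists2 y, kerZ g s y & x = hz R y.
Proof.
split.
  move=> [z ->]; rewrite ptZ_BB; exists (z *m PP g s i) => //.
  by apply/(kerZP g hsi); exists z.
move=> [y /(kerZP g hsi) [z ->] ->]; exists z; by rewrite ptZ_BB.
Qed.

Lemma phzD' a b : phz (a + b) = phz a + phz b.
Proof. exact: (phzD hhom). Qed.
Lemma phzB' a b : phz (a - b) = phz a - phz b.
Proof. exact: (phzB hhom). Qed.

Lemma ker_phz y : phz y = 0 -> kerZ g s y.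
Proof. by move=> E; rewrite -(phz_eq0 hhom hs); apply/eqP. Qed.

Lemma phi_ptZ v : phi (ptZ R v) = phz (dbl v).
Proof. by rewrite ptZ_dbl. Qed.

Lemma phi_ptZh v : phi (ptZ R v + halfe1 R n) = phz (dbl v) + h.
Proof. by rewrite ptZ_dbl halfe1_hz -hzD; exact: phzD'. Qed.

Lemma inj1 v w : v \in V -> w \in V -> phz (dbl w) = phz (dbl v) -> dbl w = dbl v.
Proof.
move=> hv hw E; apply: (@hz_inj R); rewrite -!ptZ_dbl; apply: hinj.
- by left; exists w.
- by left; exists v.
by rewrite !phi_ptZ.
Qed.

Lemma noh v w : v \in V -> w \in V -> phz (dbl w) = phz (dbl v) + h -> False.
Proof.
move=> hv hw E.
have H : ptZ R w = ptZ R v + halfe1 R n.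
  apply: hinj; [by left; exists w | by right; exists v|].
  by rewrite phi_ptZ phi_ptZh.
move: H; rewrite !ptZ_dbl halfe1_hz -hzD => /(@hz_inj R) /rowP /(_ j0).
rewrite !mxE /=; lia.
Qed.

Lemma surjW b : exists2 v, v \in V & (b = phz (dbl v) \/ b = phz (dbl v) + h).
Proof.
have [x [[v hv ->]|[v hv ->]] <-] := hsurj b; exists v => //.
  by left; rewrite phi_ptZ.
by right; rewrite phi_ptZh.
Qed.


Lemma tile_cover x : exists2 l, LL l & translate (cluster V) l x.
Proof.
pose z : 'rV[int]_n := \row_j (if val j == 0%N then Num.floor (x ord0 j * 2)
                                 else Num.floor (x ord0 j + 2^-1)).
have c1 : cube (hz R z) x.
  move=> j; apply/abs_half; rewrite /z !mxE; case: ifP => hj; rewrite ?hj.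
    have /andP[] := floor_itv (x ord0 j * 2); rewrite intrD mulr1z; lra.
  have /andP[] := floor_itv (x ord0 j + 2^-1); rewrite intrD mulr1z; lra.
have c2 : cube (hz R (z + d0 n)) x.
  move=> j; apply/abs_half; rewrite /z !mxE; case: ifP => hj; rewrite hj /=.
    have /andP[] := floor_itv (x ord0 j * 2); rewrite !intrD mulr1z; lra.
  have /andP[] := floor_itv (x ord0 j + 2^-1); rewrite !intrD mulr1z; lra.
have [v hv [E|E]] := surjW (phz z).
  exists (hz R (z - dbl v)).
    apply/LLE; exists (z - dbl v) => //; apply: ker_phz.
    by rewrite phzB' -E subrr.
  exists v => //; apply/cube_shift; by rewrite ptZ_dbl -hzD addrC subrK.
have [w hw [E2|E2]] := surjW (phz (z + d0 n)).
  exists (hz R (z + d0 n - dbl w)).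
    apply/LLE; exists (z + d0 n - dbl w) => //; apply: ker_phz.
    by rewrite phzB' -E2 subrr.
  exists w => //; apply/cube_shift; by rewrite ptZ_dbl -hzD addrC subrK.
exfalso; apply: (noh hv hw).
by move: E2; rewrite phzD' -/h => /addIr <-.
Qed.


Lemma kerphz y : kerZ g s y -> phz y = 0.
Proof. by move=> k; apply/eqP; rewrite (phz_eq0 hhom hs). Qed.

Lemma tri (p c c' : R) : `|p - c| < 2^-1 -> `|p - c'| < 2^-1 -> `|c - c'| < 1.
Proof. rewrite !ltr_norml => /andP [a b] /andP [c1 d]; apply/andP; split; lra. Qed.

Lemma disj l l' : LL l -> LL l' -> l <> l' -> forall x,
  ~ (interior (translate (cluster V) l) x /\ interior (translate (cluster V) l') x).
Proof.
move=> /LLE [y ky ->] /LLE [y' ky' ->] neq x [[e1 he1 H1] [e2 he2 H2]].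
have hm : 0 < Num.min e1 e2 by rewrite lt_min he1 he2.
have [p [hp hpn]] := perturb x hm.
have [v hv cv] : translate (cluster V) (hz R y) p.
  by apply: H1 => j; apply: (lt_le_trans (hp j)); rewrite ge_min lexx.
have [w hw cw] : translate (cluster V) (hz R y') p.
  by apply: H2 => j; apply: (lt_le_trans (hp j)); rewrite ge_min lexx orbT.
move/cube_shift: cv; rewrite ptZ_dbl -hzD => cv.
move/cube_shift: cw; rewrite ptZ_dbl -hzD => cw.
have key : forall j, `|hz R (dbl v + y) ord0 j - hz R (dbl w + y') ord0 j| < 1.
  move=> j; apply: (@tri (p ord0 j)); apply: strict_half; rewrite ?hz_half ?hpn //.
have hj0 : val j0 = 0%N by [].
have [e|e|e] := close hj0 key.
- move: (congr1 phz e); rewrite !phzD' (kerphz ky) (kerphz ky') !addr0 => /(inj1 hv hw) ee.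
  by apply: neq; move: e; rewrite ee => /addrI ->.
- move: (congr1 phz e); rewrite !phzD' (kerphz ky) (kerphz ky') !addr0 => ee.
  by apply: (noh hv hw); rewrite ee addrC.
- move: (congr1 phz e); rewrite !phzD' (kerphz ky) (kerphz ky') !addr0 => ee.
  by apply: (noh hw hv); rewrite ee addrC.
Qed.


Hypothesis hgen : generates g.

Lemma mulz_nat (k : int) : exists m : nat, g *~ k = g *+ m.
Proof.
have hN : NN g != 0 by rewrite /NN -lt0n order_gt0.
have hN0 : g *~ NN g = 0 by apply/eqP; rewrite mulz_eq0_order dvdzz.
have := modz_ge0 k hN; case E: (k %% NN g)%Z => [m|m] // _.
exists m; rewrite {1}(divz_eq k (NN g)) mulrzDr [((_ %/ _)%Z * _)]mulrC mulrzA hN0 mul0rz add0r E.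
by [].
Qed.

Lemma g_phz : phz (dz i) = g.
Proof. by rewrite /phz hs hsi. Qed.

Lemma exists_pair : exists v w, [/\ v \in V, w \in V & phz (dbl w) = phz (dbl v) + g + h].
Proof.
apply: NNPP => Hn.
have step : forall v, v \in V -> exists2 w, w \in V & phz (dbl w) = phz (dbl v) + g.
  move=> v hv; have [w hw [E|E]] := surjW (phz (dbl v) + g + h).
    by exfalso; apply: Hn; exists v, w; split.
  by exists w => //; apply: (addIr h).
have stepn : forall m v, v \in V -> exists2 w, w \in V & phz (dbl w) = phz (dbl v) + g *+ m.
  elim=> [|m IH] v hv; first by exists v; rewrite ?addr0.
  have [w hw E] := IH v hv; have [w' hw' E'] := step w hw.
  by exists w' => //; rewrite E' E mulrS [g + _]addrC addrA.
have [v0 hv0 _] := surjW 0.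
have [k Ek] := hgen h.
have [m Em] := mulz_nat k.
have [w hw E] := stepn m v0 hv0.
by apply: (noh hv0 hw); rewrite E -Em -Ek.
Qed.

Lemma nonreg : nonregular V LL.
Proof.
have [v [w [hv hw E]]] := exists_pair.
pose u' := dbl v + dz i + d0 n.
pose y' := u' - dbl w.
have ky' : kerZ g s y'.
  apply: ker_phz; rewrite /y' /u' phzB' !phzD' g_phz E -/h subrr.
  by [].
exists 0, (hz R y'), v, w; split.
- split => //.
  + apply/LLE; exists 0; last by rewrite hz0.
    by rewrite /kerZ /sigma big1 ?dvdz0 // => j _; rewrite mxE mul0r.
  + apply/LLE; by exists y'.
  + move=> /rowP /(_ j0); rewrite !mxE /=.
    move=> /eqP; rewrite eq_sym mulf_eq0 invr_eq0 pnatr_eq0 orbF intr_eq0.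
    have -> : (j0 == i) = false by apply/eqP => e; move: hi0; rewrite -e.
    by move=> /eqP; rewrite /= mulr0n addr0; lia.
have cE : ptZ R v + 0 = hz R (dbl v) by rewrite addr0 ptZ_dbl.
have cE' : ptZ R w + hz R y' = cp (hz R (dbl v)) i.
  rewrite ptZ_dbl -hzD /y' addrC subrK /u' /cp !hzD halfe1_hz (evec_hz R hi0).
  by [].
rewrite cE cE'; split; first exact: S2_affdim.
exact: (@not_neigh R n _ i hi0 j0 erefl).
Qed.

End S4.

Unset Implicit Arguments. Set Strict Implicit. Set Printing Implicit Defensive.


Theorem theorem4 (R : realType) (n : nat) (V : {fset 'rV[int]_n})
  (G : finZmodType) (phi : 'rV[R]_n -> G)
  (hcard : #|G| = (2 * #|` V|%fset)%N)
  (hhom : forall x y, Mlat x -> Mlat y -> phi (x + y) = phi x + phi y)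
  (hinj : forall x y, Wset V x -> Wset V y -> phi x = phi y -> x = y)
  (hsurj : forall g : G, exists2 x, Wset V x & phi x = g)
  (hgen : exists i : 'I_n, (1 <= i)%N /\ generates (phi (evec R i))) :
  exists L : 'rV[R]_n -> Prop, lattice_tiling (cluster (R:=R) V) L /\ nonregular V L.
Proof.
have [i [hi1 hgi]] := hgen.
have hi0 : val i != 0%N by rewrite -lt0n.
set g := phi (evec R i) in hgi.
have gE : phz phi (dz i) = g by rewrite /g (evec_hz R hi0).
have hx : forall j, exists k : int, phz phi (dz j) == g *~ k.
  by move=> j; have [k ->] := hgi (phz phi (dz j)); exists k.
pose s := fun j => if j == i then 1 else xchoose (hx j).
have hsi : s i = 1 by rewrite /s eqxx.
have hs : forall j, phz phi (dz j) = g *~ s j.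
  move=> j; rewrite /s; case: ifP => [/eqP ->|_]; first by rewrite gE.
  exact/eqP/(xchooseP (hx j)).
exists (LL (R:=R) g s i); split; last exact: (nonreg hhom hinj hsurj hs hsi hi0 hgi).
split.
- exists (BB R g s i); split; [exact: BB_unit | by []].
- exact: (disj hhom hinj hs hsi hi0).
- exact: (tile_cover hhom hinj hsurj hs hsi hi0).
Qed.
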